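(* Let $n\ge2$. The isolated subsemigroups of $\overline{\mathcal{PI}^{\ast}}_n$ are exactly $\overline{\mathcal{PI}^{\ast}}_n$, $\mathcal{S}_n$, $\overline{\mathcal{PI}^{\ast}}_n\setminus\mathcal{S}_n$, and the maximal subgroups $G(e)$ where $e$ is an idempotent with $\mathrm{corank}(e)\le 1$.
   Context: Let $X=\{1,\dots,n\}$, $X'=\{1',\dots,n'\}$. $\overline{\mathcal{PI}^{\ast}}_n$ is the set of partitions of $X\cup X'$ each of whose blocks is a singleton (point) or a generalised line (a set meeting both $X$ and $X'$), with product $\circ$: $\alpha\circ\beta$ has as generalised lines exactly the sets $A\cup D'$ such that $A\cup B'$ is a generalised line of $\alpha$ and $B\cup D'$ is a generalised line of $\beta$ (same $B\subseteq X$), all other elements being points. Idempotents are exactly the elements whose generalised lines all have the form $E\cup E'$. For an idempotent $e$, $\mathrm{corank}(e)$ is the number of $x\in X$ such that $\{x\}$ is a block of $e$. $\mathcal{S}_n$ is the group of units (elements all of whose blocks are $\{x,\pi(x)'\}$ for a permutation $\pi$). $G(e)$ is the $\mathcal{H}$-class of $e$. A subsemigroup $T$ of a semigroup $S$ is isolated if for all $a\in S$ and $k\ge1$, $a^k\in T$ implies $a\in T$. *)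

(* Defs.v *)
From mathcomp Require Import all_boot fingroup perm.
Set Implicit Arguments. Unset Strict Implicit. Unset Printing Implicit Defensive.

(* Points of X ∪ X': inl x is x ∈ X, inr x is x' ∈ X'. *)
Definition point (n : nat) := ('I_n + 'I_n)%type.
Definition elt (n : nat) := {set {set point n}}.

Section Defs.
Variable n : nat.
Implicit Types (P Q e a : elt n) (B : {set point n}).

Definition topset B : {set 'I_n} := [set x | inl x \in B].
Definition botset B : {set 'I_n} := [set x | inr x \in B].

Definition is_gline B : bool := (topset B != set0) && (botset B != set0).

Definition PIbar : {set elt n} :=
  [set P : elt n | partition P [set: point n] &&
     [forall B in P, (#|B| == 1) || is_gline B]].

Definition mkline (A D : {set 'I_n}) : {set point n} :=
  (inl @: A) :|: (inr @: D).

Definition prod_lines P Q : {set {set point n}} :=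
  [set mkline (topset L) (botset M) |
     L in [set L in P | is_gline L],
     M in [set M in Q | is_gline M & topset M == botset L]].

Definition pmul P Q : elt n :=
  prod_lines P Q :|: [set [set z] | z : point n & z \notin cover (prod_lines P Q)].

(* a^k for k >= 1 *)
Definition ppow a (k : nat) : elt n := iter k.-1 (fun x => pmul x a) a.

Definition isolated_subsemigroup (T : {set elt n}) : Prop :=
  [/\ T \subset PIbar, T != set0,
      (forall a b, a \in T -> b \in T -> pmul a b \in T) &
      (forall a k, a \in PIbar -> 0 < k -> ppow a k \in T -> a \in T)].

Definition Sn : {set elt n} :=
  [set P : elt n | [exists pi : {perm 'I_n},
      P == [set [set inl x; inr (pi x)] | x : 'I_n]]].

Definition PI_idempotent e : bool := pmul e e == e.

Definition corank e : nat := #|[set x : 'I_n | [set inl x] \in e]|.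

(* Green's relations in PIbar_n (using S^1) *)
Definition in_right_ideal a b : bool :=
  (a == b) || [exists s in PIbar, a == pmul b s].
Definition in_left_ideal a b : bool :=
  (a == b) || [exists s in PIbar, a == pmul s b].
Definition Hrel a b : bool :=
  [&& in_right_ideal a b, in_right_ideal b a,
      in_left_ideal a b & in_left_ideal b a].

Definition Hclass e : {set elt n} := [set a in PIbar | Hrel a e].

End Defs.

(* Main.v *)
Require Import Defs.
From mathcomp Require Import all_boot perm zify.
Set Implicit Arguments. Unset Strict Implicit. Unset Printing Implicit Defensive.


Section Basics.
Variable n : nat.
Local Notation pt := (point n).
Local Notation blk := {set 'I_n}.
Implicit Types (A B C D : blk) (P Q : elt n) (R : blk -> blk -> bool).

Lemma meetP (T : finType) (X Y : {set T}) :
  reflect (exists x, x \in X /\ x \in Y) (~~ [disjoint X & Y]).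
Proof.
rewrite -setI_eq0; apply: (iffP (set0Pn _)) => [[x]|[x [h1 h2]]].
  by rewrite inE => /andP[]; exists x.
by exists x; rewrite inE h1 h2.
Qed.

Lemma mk_inl A D x : (inl x \in mkline A D) = (x \in A).
Proof.
rewrite /mkline in_setU mem_imset; last by move=> ? ? [].
suff -> : (inl x \in inr @: D) = false by rewrite orbF.
by apply/negbTE/imsetP => -[].
Qed.

Lemma mk_inr A D x : (inr x \in mkline A D) = (x \in D).
Proof.
rewrite /mkline in_setU [inr x \in _ @: D]mem_imset; last by move=> ? ? [].
suff -> : (inr x \in inl @: A) = false by [].
by apply/negbTE/imsetP => -[].
Qed.

Lemma topset_mk A D : topset (mkline A D) = A.
Proof. by apply/setP => x; rewrite inE mk_inl. Qed.
Lemma botset_mk A D : botset (mkline A D) = D.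
Proof. by apply/setP => x; rewrite inE mk_inr. Qed.

Lemma mkline_inj A D A' D' : mkline A D = mkline A' D' -> A = A' /\ D = D'.
Proof.
move=> h; split; first by rewrite -(topset_mk A D) h topset_mk.
by rewrite -(botset_mk A D) h botset_mk.
Qed.

Lemma set_mk (X : {set pt}) : X = mkline (topset X) (botset X).
Proof.
by apply/setP => -[x|x]; rewrite ?mk_inl ?mk_inr inE.
Qed.

Lemma mk_neq1 A D z : A != set0 -> D != set0 -> mkline A D != [set z].
Proof.
move=> /set0Pn[a ha] /set0Pn[d hd]; apply/eqP => h.
have h1 : inl a \in mkline A D by rewrite mk_inl.
have h2 : inr d \in mkline A D by rewrite mk_inr.
by rewrite h !inE in h1 h2; move/eqP: h1 => h1; move/eqP: h2; rewrite -h1.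
Qed.

Lemma is_gline_mk A D : is_gline (mkline A D) = (A != set0) && (D != set0).
Proof. by rewrite /is_gline topset_mk botset_mk. Qed.

Lemma mk_meet A D A' D' :
  ~~ [disjoint mkline A D & mkline A' D'] ->
  ~~ [disjoint A & A'] \/ ~~ [disjoint D & D'].
Proof.
case/meetP => -[x|x] []; rewrite ?mk_inl ?mk_inr => h1 h2.
  by left; apply/meetP; exists x.
by right; apply/meetP; exists x.
Qed.

Definition Rel P A D : bool := [&& mkline A D \in P, A != set0 & D != set0].

Definition linesOf (R : blk -> blk -> bool) : {set {set pt}} :=
  [set mkline p.1 p.2 | p in [set p : blk * blk | R p.1 p.2]].

Definition mk (S : {set {set pt}}) : elt n :=
  S :|: [set [set z] | z : point n & z \notin cover S].

Definition E R := mk (linesOf R).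

Definition rcomp (R S : blk -> blk -> bool) A D := [exists B, R A B && S B D].

Definition valid (R : blk -> blk -> bool) : Prop :=
  [/\ forall A D, R A D -> (A != set0) && (D != set0),
      forall A D A' D', R A D -> R A' D' -> ~~ [disjoint A & A'] -> A = A' /\ D = D' &
      forall A D A' D', R A D -> R A' D' -> ~~ [disjoint D & D'] -> A = A' /\ D = D'].

Lemma in_linesOf R X : reflect (exists A D, [/\ R A D & X = mkline A D]) (X \in linesOf R).
Proof.
apply: (iffP imsetP) => [[p]|[A [D [h ->]]]].
  by rewrite inE => hp ->; exists p.1, p.2.
by exists (A, D) => //; rewrite inE.
Qed.

Lemma mkline_linesOf R A D : R A D -> mkline A D \in linesOf R.
Proof. by move=> h; apply/in_linesOf; exists A, D. Qed.

Lemma PIbar_crit (S : elt n) :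
  (forall X, X \in S -> X != set0 /\ ((#|X| == 1) || is_gline X)) ->
  (forall X Y, X \in S -> Y \in S -> X != Y -> [disjoint X & Y]) ->
  (forall z, z \in cover S) -> S \in PIbar n.
Proof.
move=> h1 h2 h3; rewrite inE; apply/andP; split.
  apply/and3P; split.
  - by apply/eqP/setP => z; rewrite h3 inE.
  - by apply/trivIsetP => X Y hX hY; apply: h2.
  - by apply/negP => /h1 [] /eqP.
by apply/forall_inP => X /h1 [].
Qed.

Lemma mk_PIbar (S : {set {set pt}}) :
  (forall X, X \in S -> is_gline X) ->
  (forall X Y, X \in S -> Y \in S -> X != Y -> [disjoint X & Y]) ->
  mk S \in PIbar n.
Proof.
move=> hg hd; apply: PIbar_crit.
- move=> X; rewrite in_setU => /orP[hX|/imsetP[z _ ->]].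
    split; last by rewrite (hg X hX) orbT.
    case/andP: (hg X hX) => /set0Pn[x hx] _; apply/set0Pn; exists (inl x).
    by move: hx; rewrite inE.
  by rewrite cards1; split => //; apply/set0Pn; exists z; rewrite inE.
- move=> X Y; rewrite !in_setU => /orP[hX|/imsetP[z hz ->]] /orP[hY|/imsetP[w hw ->]] hne.
  + exact: hd.
  + rewrite disjoint_sym disjoints1; apply/negP => hwY.
    by move: hw; rewrite ?inE => /negP; apply; apply/bigcupP; exists X.
  + rewrite disjoints1; apply/negP => hzX.
    by move: hz; rewrite ?inE => /negP; apply; apply/bigcupP; exists Y.
  + rewrite disjoints1 inE; apply: contra hne => /eqP ->; done.
- move=> z; case hz: (z \in cover S).
    by apply/bigcupP; case/bigcupP: hz => X hX hzX; exists X => //; rewrite in_setU hX.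
  apply/bigcupP; exists [set z]; last by rewrite inE.
  by rewrite in_setU; apply/orP; right; apply/imsetP; exists z; rewrite // inE hz.
Qed.

Lemma E_PIbar R : valid R -> E R \in PIbar n.
Proof.
case=> hne ht hb; apply: mk_PIbar.
  by move=> X /in_linesOf [A [D [h ->]]]; rewrite is_gline_mk hne.
move=> X Y /in_linesOf [A [D [h ->]]] /in_linesOf [A' [D' [h' ->]]] hneq.
apply/negPn/negP => /mk_meet [/(ht _ _ _ _ h h')|/(hb _ _ _ _ h h')] [e1 e2];
 by move: hneq; rewrite e1 e2 eqxx.
Qed.

Lemma Rel_E R A D : valid R -> Rel (E R) A D = R A D.
Proof.
case=> hne _ _; apply/idP/idP.
  case/and3P; rewrite /E /mk in_setU => /orP[/in_linesOf [A' [D' [h e]]]|/imsetP[z _ e]] h1 h2.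
    by case: (mkline_inj e) => -> ->.
  by move: (mk_neq1 z h1 h2); rewrite e eqxx.
move=> h; case/andP: (hne _ _ h) => h1 h2; rewrite /Rel h1 h2 andbT.
by rewrite /E /mk in_setU mkline_linesOf.
Qed.

Lemma eq_E R R' : (forall A D, R A D = R' A D) -> E R = E R'.
Proof.
move=> h; rewrite /E /linesOf.
have -> : [set p : blk * blk | R p.1 p.2] = [set p | R' p.1 p.2].
  by apply/setP => p; rewrite !inE h.
by [].
Qed.


Lemma PIbar_triv P : P \in PIbar n ->
  forall X Y : {set pt}, X \in P -> Y \in P -> X != Y -> [disjoint X & Y].
Proof. by rewrite inE => /andP[/and3P[_ /trivIsetP h _] _] X Y hX hY; apply: h. Qed.

Lemma PIbar_cover P z : P \in PIbar n -> exists2 X, X \in P & z \in X.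
Proof.
rewrite inE => /andP[/and3P[/eqP hc _ _] _].
have : z \in cover P by rewrite hc inE.
by case/bigcupP => X hX hz; exists X.
Qed.

Lemma PIbar_blk P X : P \in PIbar n -> X \in P -> (#|X| == 1) || is_gline X.
Proof. by rewrite inE => /andP[_ /forall_inP h] /h. Qed.

Lemma Rel_ne P A D : Rel P A D -> (A != set0) /\ (D != set0).
Proof. by case/and3P. Qed.

Lemma Rel_in P A D : Rel P A D -> mkline A D \in P.
Proof. by case/and3P. Qed.

Lemma gline_Rel P X : X \in P -> is_gline X -> Rel P (topset X) (botset X).
Proof. by move=> hX /andP[h1 h2]; rewrite /Rel -set_mk hX h1 h2. Qed.

Lemma valid_Rel P : P \in PIbar n -> valid (Rel P).
Proof.
move=> hP; have ht := PIbar_triv hP; split.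
- by move=> A D /and3P[_ -> ->].
- move=> A D A' D' h h' /meetP [x [hx hx']].
  have e : mkline A D = mkline A' D'.
    apply/eqP; apply: contraT => hne.
    have := ht _ _ (Rel_in h) (Rel_in h') hne.
    by move/disjointFr/(_ (_ : inl x \in _)); rewrite !mk_inl hx hx' => /(_ isT).
  exact: mkline_inj.
- move=> A D A' D' h h' /meetP [x [hx hx']].
  have e : mkline A D = mkline A' D'.
    apply/eqP; apply: contraT => hne.
    have := ht _ _ (Rel_in h) (Rel_in h') hne.
    by move/disjointFr/(_ (_ : inr x \in _)); rewrite !mk_inr hx hx' => /(_ isT).
  exact: mkline_inj.
Qed.

Lemma E_Rel P : P \in PIbar n -> E (Rel P) = P.
Proof.
move=> hP; have ht := PIbar_triv hP.
apply/eqP; rewrite eqEsubset; apply/andP; split; apply/subsetP => X.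
  rewrite /E /mk in_setU => /orP[/in_linesOf [A [D [h ->]]]|/imsetP [z hz ->]].
    exact: Rel_in.
  have [Y hY hzY] := PIbar_cover z hP.
  case/orP: (PIbar_blk hP hY) => [/cards1P [z' ez']|hg].
    by move: hzY; rewrite ez' inE => /eqP ->; rewrite -ez'.
  move: hz; rewrite ?inE => /negP []; apply/bigcupP; exists Y => //.
  by rewrite [Y]set_mk; apply: mkline_linesOf; apply: gline_Rel.
move=> hX; rewrite /E /mk in_setU.
case/orP: (PIbar_blk hP hX) => [/cards1P [z ez]|hg].
  apply/orP; right; apply/imsetP; exists z => //; rewrite ?inE.
  apply/negP => /bigcupP [Y /in_linesOf [A [D [h eY]]] hzY].
  have hYP : Y \in P by rewrite eY; apply: Rel_in.
  have hne : X != Y.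
    apply/negP => /eqP e; have [h1 h2] := Rel_ne h.
    by move: (mk_neq1 z h1 h2); rewrite -eY -e ez eqxx.
  have := ht _ _ hX hYP hne.
  by move/disjointFr => /(_ z); rewrite hzY ez inE eqxx => /(_ isT).
by apply/orP; left; rewrite [X]set_mk; apply: mkline_linesOf; apply: gline_Rel.
Qed.

Lemma pmul_E P Q : pmul P Q = E (rcomp (Rel P) (Rel Q)).
Proof.
rewrite /pmul /E; congr mk.
apply/setP => X; apply/imset2P/in_linesOf.
  case=> L M; rewrite !inE => /andP[hL gL] /and3P[hM gM /eqP e] ->.
  exists (topset L), (botset M); split => //.
  apply/existsP; exists (botset L); rewrite gline_Rel //= -e.
  exact: gline_Rel.
case=> A [D [/existsP [B /andP[h1 h2]] ->]].
apply: (@Imset2spec _ _ _ _ _ _ _ (mkline A B) (mkline B D)).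
- by rewrite inE Rel_in //= is_gline_mk; case: (Rel_ne h1) => -> ->.
- rewrite inE Rel_in //= is_gline_mk topset_mk botset_mk eqxx andbT.
  by case: (Rel_ne h2) => -> ->.
- by rewrite topset_mk botset_mk.
Qed.

Lemma valid_comp R S : valid R -> valid S -> valid (rcomp R S).
Proof.
case=> hR1 hR2 hR3 [hS1 hS2 hS3]; split.
- move=> A D /existsP [B /andP [h1 h2]].
  by case/andP: (hR1 _ _ h1) => -> _; case/andP: (hS1 _ _ h2).
- move=> A D A' D' /existsP [B /andP [h1 h2]] /existsP [B' /andP [h1' h2']] hm.
  case: (hR2 _ _ _ _ h1 h1' hm) => eA eB; subst.
  case/andP: (hS1 _ _ h2) => /set0Pn [b hb] _.
  have hm' : ~~ [disjoint B' & B'] by apply/meetP; exists b.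
  by case: (hS2 _ _ _ _ h2 h2' hm').
- move=> A D A' D' /existsP [B /andP [h1 h2]] /existsP [B' /andP [h1' h2']] hm.
  case: (hS3 _ _ _ _ h2 h2' hm) => eB eD; subst.
  case/andP: (hR1 _ _ h1) => _ /set0Pn [b hb].
  have hm' : ~~ [disjoint B' & B'] by apply/meetP; exists b.
  by case: (hR3 _ _ _ _ h1 h1' hm').
Qed.

Lemma pmul_PI P Q : P \in PIbar n -> Q \in PIbar n -> pmul P Q \in PIbar n.
Proof.
by move=> hP hQ; rewrite pmul_E; apply: E_PIbar; apply: valid_comp; apply: valid_Rel.
Qed.

Lemma Rel_pmul P Q A D : P \in PIbar n -> Q \in PIbar n ->
  Rel (pmul P Q) A D = rcomp (Rel P) (Rel Q) A D.
Proof.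
by move=> hP hQ; rewrite pmul_E Rel_E //; apply: valid_comp; apply: valid_Rel.
Qed.

Lemma PI_ext P Q : P \in PIbar n -> Q \in PIbar n ->
  (forall A D, Rel P A D = Rel Q A D) -> P = Q.
Proof. by move=> hP hQ h; rewrite -(E_Rel hP) -(E_Rel hQ); apply: eq_E. Qed.

Lemma pmulA P Q S : P \in PIbar n -> Q \in PIbar n -> S \in PIbar n ->
  pmul (pmul P Q) S = pmul P (pmul Q S).
Proof.
move=> hP hQ hS; apply: PI_ext; rewrite ?pmul_PI // => A D.
rewrite !Rel_pmul ?pmul_PI // /rcomp; apply/existsP/existsP.
  case=> C /andP []; rewrite Rel_pmul // /rcomp => /existsP [B /andP [h1 h2]] h3.
  by exists B; rewrite h1 /=; rewrite Rel_pmul // /rcomp; apply/existsP; exists C; rewrite h2.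
case=> B /andP [h1]; rewrite Rel_pmul // /rcomp => /existsP [C /andP [h2 h3]].
by exists C; rewrite h3 andbT Rel_pmul // /rcomp; apply/existsP; exists B; rewrite h1.
Qed.

End Basics.


Section Powers.
Variable n : nat.
Local Notation pt := (point n).
Local Notation blk := {set 'I_n}.
Implicit Types (A B C D : blk) (P Q a : elt n) (R : blk -> blk -> bool).

Lemma ppow1 a : ppow a 1 = a. Proof. by []. Qed.

Lemma ppowS a k : 0 < k -> ppow a k.+1 = pmul (ppow a k) a.
Proof. by case: k. Qed.

Lemma ppow_PI a k : a \in PIbar n -> 0 < k -> ppow a k \in PIbar n.
Proof.
move=> ha; elim: k => // k IH _; case: k IH => // k IH.
by rewrite ppowS // pmul_PI // IH.
Qed.

Lemma ppowD a i j : a \in PIbar n -> 0 < i -> 0 < j ->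
  ppow a (i + j) = pmul (ppow a i) (ppow a j).
Proof.
move=> ha hi; elim: j => // j IH _; case: j IH => [_|j IH].
  by rewrite addn1 ppowS.
rewrite addnS ppowS ?addn_gt0 ?hi // IH // [ppow a j.+2]ppowS // pmulA ?ppow_PI //.
Qed.

Lemma ppowSl a k : a \in PIbar n -> 0 < k -> ppow a k.+1 = pmul a (ppow a k).
Proof. by move=> ha hk; rewrite -add1n ppowD. Qed.

Lemma ppow_idem a : a \in PIbar n ->
  exists k, 1 < k /\ pmul (ppow a k) (ppow a k) = ppow a k.
Proof.
move=> ha.
pose f := fun i : 'I_(#|{: elt n}|).+1 => ppow a i.+1.
have : ~~ injectiveb f.
  apply/negP => /injectiveP hf; have := @leq_card _ _ f hf.
  by rewrite card_ord ltnn.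
case/injectivePn => i [j hij e].
wlog lt : i j hij e / (i < j)%N.
  move=> W; case: (ltngtP i j) => h; first exact: (W i j).
    by apply: (W j i) => //; rewrite eq_sym.
  by move: hij; rewrite (val_inj h) eqxx.
set s := i.+1; set p := j - i.
have hs : 0 < s by [].
have hp : 0 < p by rewrite subn_gt0.
have e0 : ppow a (s + p) = ppow a s.
  have -> : s + p = j.+1 by rewrite /s /p; lia.
  by rewrite /s; symmetry; exact: e.
have L1 : forall q, ppow a (s + p + q) = ppow a (s + q).
  case=> [|q]; first by rewrite !addn0.
  by rewrite ppowD ?addn_gt0 ?hs // e0 -ppowD.
have L2 : forall t q, ppow a (s + t * p + q) = ppow a (s + q).
  elim=> [|t IH] q; first by rewrite mul0n addn0.
  by rewrite mulSn addnA -(addnA (s + p)) L1 addnA IH.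
exists (2 * s * p); split; first by nia.
rewrite -ppowD; try nia.
have -> : 2 * s * p + 2 * s * p = s + (2 * s) * p + (2 * s * p - s) by nia.
by rewrite L2; congr ppow; nia.
Qed.

End Powers.


Section Tops.
Variable n : nat.
Local Notation pt := (point n).
Local Notation blk := {set 'I_n}.
Implicit Types (A B C D : blk) (P Q a e : elt n) (R S : blk -> blk -> bool) (F G : {set blk}).

Definition tops P := [set A | [exists D, Rel P A D]].
Definition bots P := [set D | [exists A, Rel P A D]].
Definition pdf F := (forall A, A \in F -> A != set0) /\
  (forall A B, A \in F -> B \in F -> ~~ [disjoint A & B] -> A = B).
Definition diag F A B := (A == B) && (A \in F).

Lemma in_tops P A : reflect (exists D, Rel P A D) (A \in tops P).
Proof. by rewrite inE; apply: existsP. Qed.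
Lemma in_bots P D : reflect (exists A, Rel P A D) (D \in bots P).
Proof. by rewrite inE; apply: existsP. Qed.

Lemma self_meet A : A != set0 -> ~~ [disjoint A & A].
Proof. by case/set0Pn => x hx; apply/meetP; exists x. Qed.

Lemma top_uniq P A D D' : P \in PIbar n -> Rel P A D -> Rel P A D' -> D = D'.
Proof.
move=> hP h h'; case: (valid_Rel hP) => _ h2 _.
by case: (h2 _ _ _ _ h h' (self_meet (proj1 (Rel_ne h)))).
Qed.

Lemma bot_uniq P A A' D : P \in PIbar n -> Rel P A D -> Rel P A' D -> A = A'.
Proof.
move=> hP h h'; case: (valid_Rel hP) => _ _ h3.
by case: (h3 _ _ _ _ h h' (self_meet (proj2 (Rel_ne h)))).
Qed.

Lemma pdf_tops P : P \in PIbar n -> pdf (tops P).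
Proof.
move=> hP; case: (valid_Rel hP) => h1 h2 _; split.
  by move=> A /in_tops [D /h1 /andP[]].
by move=> A B /in_tops [D hD] /in_tops [D' hD'] hm; case: (h2 _ _ _ _ hD hD' hm).
Qed.

Lemma pdf_bots P : P \in PIbar n -> pdf (bots P).
Proof.
move=> hP; case: (valid_Rel hP) => h1 _ h3; split.
  by move=> A /in_bots [D /h1 /andP[]].
by move=> A B /in_bots [D hD] /in_bots [D' hD'] hm; case: (h3 _ _ _ _ hD hD' hm).
Qed.

Lemma valid_diag F : pdf F -> valid (diag F).
Proof.
case=> h1 h2; split.
- by move=> A D /andP[/eqP <- hA]; rewrite h1.
- move=> A D A' D' /andP[/eqP <- hA] /andP[/eqP <- hA'] hm.
  by have e := h2 _ _ hA hA' hm.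
- move=> A D A' D' /andP[/eqP <- hA] /andP[/eqP <- hA'] hm.
  by have e := h2 _ _ hA hA' hm.
Qed.

Lemma Rel_diag F A D : pdf F -> Rel (E (diag F)) A D = diag F A D.
Proof. by move=> h; rewrite Rel_E //; apply: valid_diag. Qed.

Lemma diag_PI F : pdf F -> E (diag F) \in PIbar n.
Proof. by move=> h; apply: E_PIbar; apply: valid_diag. Qed.

Lemma tops_diag F : pdf F -> tops (E (diag F)) = F.
Proof.
move=> h; apply/setP => A; apply/in_tops/idP => [[D]|hA].
  by rewrite Rel_diag // => /andP[].
by exists A; rewrite Rel_diag // /diag eqxx.
Qed.

Lemma pmul_EE R S : valid R -> valid S -> pmul (E R) (E S) = E (rcomp R S).
Proof.
by move=> hR hS; rewrite pmul_E; apply: eq_E => A D; rewrite /rcomp;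
  apply: eq_existsb => B; rewrite !Rel_E.
Qed.

Lemma comp_diag F G A D : rcomp (diag F) (diag G) A D = diag (F :&: G) A D.
Proof.
apply/existsP/idP => [[B /andP[/andP[/eqP e1 h1] /andP[/eqP e2 h2]]]|/andP[/eqP <- h]].
  by subst; rewrite /diag eqxx inE h1.
by exists A; move: h; rewrite inE /diag eqxx => /andP[-> ->].
Qed.

Lemma diag_idem F : pdf F -> pmul (E (diag F)) (E (diag F)) = E (diag F).
Proof.
move=> h; have hv := valid_diag h; rewrite pmul_EE //; apply: eq_E => A D.
by rewrite comp_diag setIid.
Qed.

Lemma idem_Rel e A D : e \in PIbar n -> pmul e e = e ->
  Rel e A D = diag (tops e) A D.
Proof.
move=> he hee; apply/idP/idP => [h|/andP[/eqP <- /in_tops [D' hD']]].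
  have hA : A \in tops e by apply/in_tops; exists D.
  rewrite /diag hA andbT.
  move: (h); rewrite -{1}hee Rel_pmul // => /existsP [C /andP[h1 h2]].
  have eC : C = D by apply: top_uniq h1 h.
  subst C; have := bot_uniq he h2 h.
  by move=> ->.
move: (hD'); rewrite -{1}hee Rel_pmul // => /existsP [C /andP[h1 h2]].
have eC : C = D' by apply: top_uniq h1 hD'.
subst C; have eA := bot_uniq he h2 hD'.
by rewrite -eA.
Qed.

Lemma idem_E e : e \in PIbar n -> pmul e e = e -> e = E (diag (tops e)).
Proof.
move=> he hee; apply: PI_ext => //; first by apply: diag_PI; apply: pdf_tops.
by move=> A D; rewrite idem_Rel // Rel_diag //; apply: pdf_tops.
Qed.

Lemma tops_pmul_sub P Q : P \in PIbar n -> Q \in PIbar n -> tops (pmul P Q) \subset tops P.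
Proof.
move=> hP hQ; apply/subsetP => A /in_tops [D]; rewrite Rel_pmul // => /existsP [B /andP[h _]].
by apply/in_tops; exists B.
Qed.

Lemma bots_pmul_sub P Q : P \in PIbar n -> Q \in PIbar n -> bots (pmul P Q) \subset bots Q.
Proof.
move=> hP hQ; apply/subsetP => D /in_bots [A]; rewrite Rel_pmul // => /existsP [B /andP[_ h]].
by apply/in_bots; exists B.
Qed.

Lemma tops_pmul_eq P Q : P \in PIbar n -> Q \in PIbar n -> bots P \subset tops Q ->
  tops (pmul P Q) = tops P.
Proof.
move=> hP hQ hs; apply/eqP; rewrite eqEsubset tops_pmul_sub //=.
apply/subsetP => A /in_tops [B hB].
have : B \in tops Q by apply: (subsetP hs); apply/in_bots; exists A.
case/in_tops => D hD; apply/in_tops; exists D; rewrite Rel_pmul //.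
by apply/existsP; exists B; rewrite hB hD.
Qed.

Lemma bots_pmul_eq P Q : P \in PIbar n -> Q \in PIbar n -> tops Q \subset bots P ->
  bots (pmul P Q) = bots Q.
Proof.
move=> hP hQ hs; apply/eqP; rewrite eqEsubset bots_pmul_sub //=.
apply/subsetP => D /in_bots [B hB].
have : B \in bots P by apply: (subsetP hs); apply/in_tops; exists D.
case/in_bots => A hA; apply/in_bots; exists A; rewrite Rel_pmul //.
by apply/existsP; exists B; rewrite hB hA.
Qed.

Lemma card_tops_bots P : P \in PIbar n -> #|tops P| = #|bots P|.
Proof.
move=> hP; pose L := [set p : blk * blk | Rel P p.1 p.2].
have -> : tops P = [set p.1 | p in L].
  apply/setP => A; apply/in_tops/imsetP => [[D h]|[p]].
    by exists (A, D); rewrite // inE.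
  by rewrite inE => h ->; exists p.2.
have -> : bots P = [set p.2 | p in L].
  apply/setP => A; apply/in_bots/imsetP => [[D h]|[p]].
    by exists (D, A); rewrite // inE.
  by rewrite inE => h ->; exists p.1.
rewrite !card_in_imset //.
  move=> [A D] [A' D']; rewrite !inE /= => h h' e; subst.
  by rewrite (bot_uniq hP h h').
move=> [A D] [A' D']; rewrite !inE /= => h h' e; subst.
by rewrite (top_uniq hP h h').
Qed.

End Tops.


Section Units.
Variable n : nat.
Local Notation pt := (point n).
Local Notation blk := {set 'I_n}.
Implicit Types (A B C D : blk) (P Q a e : elt n) (R S : blk -> blk -> bool) (F G : {set blk}).

Definition unitP P := [/\ P \in PIbar n,
  forall A D, Rel P A D -> #|A| = 1 /\ #|D| = 1 &
  forall x, exists D, Rel P [set x] D].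

Definition permElt (pi : {perm 'I_n}) : elt n := [set [set inl x; inr (pi x)] | x : 'I_n].

Lemma mk11 (x y : 'I_n) : mkline [set x] [set y] = [set inl x; inr y] :> {set pt}.
Proof. by rewrite /mkline !imset_set1. Qed.

Lemma set1_ne (T : finType) (x : T) : [set x] != set0.
Proof. by apply/set0Pn; exists x; rewrite inE. Qed.

Lemma meet11 (T : finType) (x y : T) : ~~ [disjoint [set x] & [set y]] -> x = y.
Proof. by case/meetP => z []; rewrite !inE => /eqP -> /eqP. Qed.

Lemma permElt_PI pi : permElt pi \in PIbar n.
Proof.
apply: PIbar_crit.
- move=> X /imsetP [x _ ->]; rewrite -mk11 is_gline_mk !set1_ne orbT; split => //.
  by apply/set0Pn; exists (inl x); rewrite mk_inl inE.
- move=> X Y /imsetP [x _ ->] /imsetP [y _ ->] hne.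
  apply/negPn/negP; rewrite -!mk11 => /mk_meet [/meet11 e|/meet11 /perm_inj e];
   by move: hne; rewrite e eqxx.
- case=> [x|y]; apply/bigcupP.
    by exists [set inl x; inr (pi x)]; [apply: imset_f | rewrite !inE eqxx].
  exists [set inl ((pi^-1)%g y); inr (pi ((pi^-1)%g y))]; first by apply: imset_f.
  by rewrite permKV !inE eqxx orbT.
Qed.

Lemma Rel_permElt pi A D :
  Rel (permElt pi) A D = [exists x, (A == [set x]) && (D == [set pi x])].
Proof.
apply/idP/existsP => [/and3P [/imsetP [x _ e] _ _]|[x /andP [/eqP -> /eqP ->]]].
  by rewrite -mk11 in e; case: (mkline_inj e) => -> ->; exists x; rewrite !eqxx.
by rewrite /Rel !set1_ne !andbT mk11; apply/imsetP; exists x.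
Qed.

Lemma unitP_permElt pi : unitP (permElt pi).
Proof.
split; first exact: permElt_PI.
  by move=> A D; rewrite Rel_permElt => /existsP [x /andP [/eqP -> /eqP ->]]; rewrite !cards1.
by move=> x; exists [set pi x]; rewrite Rel_permElt; apply/existsP; exists x; rewrite !eqxx.
Qed.

Lemma Sn_unitP P : (P \in Sn n) <-> unitP P.
Proof.
split.
  by rewrite inE => /existsP [pi /eqP ->]; apply: unitP_permElt.
case=> hP h1 h2.
pose f x := odflt x [pick y | Rel P [set x] [set y]].
have hf : forall x, Rel P [set x] [set f x].
  move=> x; rewrite /f; case: pickP => [y //|h0].
  case: (h2 x) => D hD; case: (h1 _ _ hD) => _ /eqP /cards1P [y ey].
  by move: (h0 y); rewrite -ey hD.
have finj : injective f.
  move=> x y e; have := hf y; rewrite -e => hy; have := bot_uniq hP (hf x) hy.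
  by move/set1_inj.
rewrite inE; apply/existsP; exists (perm finj); apply/eqP.
apply: PI_ext => //; first exact: permElt_PI.
move=> A D; rewrite Rel_permElt; apply/idP/existsP => [h|[x /andP [/eqP -> /eqP ->]]].
  case: (h1 _ _ h) => /eqP /cards1P [x ex] _; subst A.
  by exists x; rewrite permE eqxx (top_uniq hP h (hf x)) eqxx.
by rewrite permE.
Qed.

Lemma Sn_PI P : P \in Sn n -> P \in PIbar n.
Proof. by case/Sn_unitP. Qed.

Lemma Sn_mul P Q : P \in Sn n -> Q \in Sn n -> pmul P Q \in Sn n.
Proof.
move=> /Sn_unitP [hP hP1 hP2] /Sn_unitP [hQ hQ1 hQ2]; apply/Sn_unitP; split.
- exact: pmul_PI.
- move=> A D; rewrite Rel_pmul // => /existsP [B /andP [h1 h2]].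
  by split; [case: (hP1 _ _ h1) | case: (hQ1 _ _ h2)].
- move=> x; case: (hP2 x) => B hB; case: (hP1 _ _ hB) => _ /eqP /cards1P [w ew].
  case: (hQ2 w) => D hD; exists D; rewrite Rel_pmul //.
  by apply/existsP; exists B; rewrite hB ew hD.
Qed.

Lemma count1 (f : 'I_n -> blk) : (forall x, f x != set0) ->
  (forall x y, x != y -> [disjoint f x & f y]) ->
  (forall x, exists w, f x = [set w]) /\ (forall w, exists x, f x = [set w]).
Proof.
move=> hne hd.
pose g x := odflt x [pick w in f x].
have hg : forall x, g x \in f x.
  move=> x; rewrite /g; case: pickP => [w //|h0].
  by case/set0Pn: (hne x) => w hw; move: (h0 w); rewrite hw.
have eqf : forall x y, ~~ [disjoint f x & f y] -> x = y.
  by move=> x y h; apply/eqP; apply: contraT => /hd; rewrite (negbTE h).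
have ginj : injective g.
  by move=> x y e; apply: eqf; apply/meetP; exists (g x); rewrite hg e hg.
have gsurj : forall w, exists x, w = g x.
  move=> w; have := inj_card_onto ginj (leqnn _) w.
  by case/codomP => x ->; exists x.
have fx : forall x, f x = [set g x].
  move=> x; apply/setP => w; rewrite inE; apply/idP/eqP => [hw|->]; last exact: hg.
  case: (gsurj w) => y ey; subst w.
  by rewrite (eqf x y) //; apply/meetP; exists (g y); rewrite hw hg.
split; first by move=> x; exists (g x).
by move=> w; case: (gsurj w) => x ->; exists x.
Qed.

Lemma Sn_mul_inv P Q : P \in PIbar n -> Q \in PIbar n -> pmul P Q \in Sn n ->
  P \in Sn n /\ Q \in Sn n.
Proof.
move=> hP hQ /Sn_unitP [_ h1 h2].
have hx : forall x, exists B D, [/\ Rel P [set x] B, Rel Q B D & #|D| = 1].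
  move=> x; case: (h2 x) => D hD; case: (h1 _ _ hD) => _ cD.
  move: hD; rewrite Rel_pmul // => /existsP [B /andP [hB hBD]].
  by exists B, D.
pose fB x := odflt set0 [pick B | Rel P [set x] B].
have hfB : forall x, Rel P [set x] (fB x).
  move=> x; rewrite /fB; case: pickP => [B //|h0].
  by case: (hx x) => B [D [hB _ _]]; move: (h0 B); rewrite hB.
have [c1 c2] : (forall x, exists w, fB x = [set w]) /\ (forall w, exists x, fB x = [set w]).
  apply: count1; first by move=> x; case: (Rel_ne (hfB x)).
  move=> x y hxy; apply/negPn/negP => hm.
  case: (valid_Rel hP) => _ _ h3.
  by case: (h3 _ _ _ _ (hfB x) (hfB y) hm) => /set1_inj e _; move: hxy; rewrite e eqxx.
have topP : forall A D, Rel P A D -> exists x, A = [set x] /\ D = fB x.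
  move=> A D h; case/set0Pn: (proj1 (Rel_ne h)) => x hxA.
  case: (valid_Rel hP) => _ h2' _.
  have hm : ~~ [disjoint A & [set x]] by apply/meetP; exists x; rewrite hxA inE.
  by case: (h2' _ _ _ _ h (hfB x) hm) => -> ->; exists x.
have hw : forall w, exists D, Rel Q [set w] D /\ #|D| = 1.
  move=> w; case: (c2 w) => x ex; case: (hx x) => B [D [hB hBD cD]].
  by exists D; rewrite -ex (top_uniq hP (hfB x) hB); split.
split; apply/Sn_unitP; split => //.
- move=> A D /topP [x [-> ->]]; case: (c1 x) => w ->; by rewrite !cards1.
- by move=> x; exists (fB x).
- move=> B D h; case/set0Pn: (proj1 (Rel_ne h)) => w hwB.
  case: (hw w) => D' [hD' cD']; case: (valid_Rel hQ) => _ h2' _.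
  have hm : ~~ [disjoint B & [set w]] by apply/meetP; exists w; rewrite hwB inE.
  by case: (h2' _ _ _ _ h hD' hm) => -> ->; rewrite cards1.
- by move=> w; case: (hw w) => D [hD _]; exists D.
Qed.

Lemma Sn_idem_uniq e f : e \in Sn n -> f \in Sn n -> pmul e e = e -> pmul f f = f -> e = f.
Proof.
have key : forall e, e \in Sn n -> pmul e e = e ->
    forall A D, Rel e A D = diag [set [set x] | x : 'I_n] A D.
  move=> g /Sn_unitP [hg h1 h2] hgg A D; rewrite idem_Rel // /diag.
  congr andb; apply/in_tops/imsetP => [[D' hD']|[x _ ->]].
    by case: (h1 _ _ hD') => /eqP /cards1P [x ->] _; exists x.
  exact: h2.
move=> he hf hee hff; apply: PI_ext; rewrite ?Sn_PI // => A D.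
by rewrite (key e) // (key f).
Qed.

Definition zeroE : elt n := E (fun _ _ => false).

Lemma valid_false : valid (fun _ _ : blk => false).
Proof. by split. Qed.

Lemma zero_PI : zeroE \in PIbar n.
Proof. exact: E_PIbar valid_false. Qed.

Lemma Rel_zero A D : Rel zeroE A D = false.
Proof. by rewrite Rel_E // valid_false. Qed.

Lemma zero_notSn : 0 < n -> zeroE \notin Sn n.
Proof.
move=> hn; apply/negP => /Sn_unitP [_ _ h].
by case: (h (Ordinal hn)) => D; rewrite Rel_zero.
Qed.

Lemma id_Sn : permElt 1 \in Sn n.
Proof. by rewrite inE; apply/existsP; exists 1%g. Qed.

End Units.


Section Green.
Variable n : nat.
Local Notation pt := (point n).
Local Notation blk := {set 'I_n}.
Implicit Types (A B C D : blk) (P Q a b e : elt n) (R S : blk -> blk -> bool) (F G : {set blk}).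

Definition Gp e := [set a in PIbar n | (tops a == tops e) && (bots a == tops e)].

Lemma bots_idem e : e \in PIbar n -> pmul e e = e -> bots e = tops e.
Proof.
move=> he hee; apply/setP => D; apply/in_bots/idP => [[A]|hD].
  by rewrite idem_Rel // => /andP [/eqP -> ].
by exists D; rewrite idem_Rel // /diag eqxx.
Qed.

Lemma tops_pow_sub a k : a \in PIbar n -> 0 < k -> tops (ppow a k) \subset tops a.
Proof.
move=> ha; elim: k => // k IH _; case: k IH => [_|k IH]; first by rewrite ppow1.
rewrite ppowS //; apply: subset_trans (IH isT); apply: tops_pmul_sub => //.
exact: ppow_PI.
Qed.

Lemma bots_pow_sub a k : a \in PIbar n -> 0 < k -> bots (ppow a k) \subset bots a.
Proof.
move=> ha; case: k => // k _; case: k => [|k]; first by rewrite ppow1.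
by rewrite ppowS //; apply: bots_pmul_sub => //; apply: ppow_PI.
Qed.

Lemma pow_tops_eq a k : a \in PIbar n -> tops a = bots a -> 0 < k ->
  tops (ppow a k) = tops a /\ bots (ppow a k) = bots a.
Proof.
move=> ha e; elim: k => // k IH _; case: k IH => [_|k IH]; first by rewrite ppow1.
case: (IH isT) => e1 e2; have hp : ppow a k.+1 \in PIbar n by apply: ppow_PI.
rewrite ppowS //; split.
  by rewrite tops_pmul_eq // ?e1 // e2 -e.
by rewrite bots_pmul_eq // e2 e.
Qed.

Lemma Gp_E e a : (a \in Gp e) = [&& a \in PIbar n, tops a == tops e & bots a == tops e].
Proof. by rewrite /Gp in_set. Qed.

Lemma Gp_PI e a : a \in Gp e -> a \in PIbar n.
Proof. by rewrite Gp_E => /andP []. Qed.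

Lemma Gp_mul e a b : a \in Gp e -> b \in Gp e -> pmul a b \in Gp e.
Proof.
rewrite !Gp_E => /and3P [ha /eqP ta /eqP ba] /and3P [hb /eqP tb /eqP bb].
by rewrite pmul_PI //= tops_pmul_eq ?ta ?bots_pmul_eq ?bb ?tb ?ba ?eqxx.
Qed.

Lemma Gp_pow e a k : a \in Gp e -> 0 < k -> ppow a k \in Gp e.
Proof.
move=> ha; elim: k => // k IH _; case: k IH => [_|k IH]; first by rewrite ppow1.
by rewrite ppowS // Gp_mul // IH.
Qed.

Lemma Gp_idem e f : e \in PIbar n -> pmul e e = e -> f \in Gp e -> pmul f f = f -> f = e.
Proof.
move=> he hee hf hff; have hfP := Gp_PI hf.
move: hf; rewrite Gp_E => /and3P [_ /eqP tf _].
by rewrite (idem_E hfP hff) (idem_E he hee) tf.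
Qed.

Lemma e_left e a : e \in PIbar n -> pmul e e = e -> a \in Gp e -> pmul e a = a.
Proof.
move=> he hee; rewrite Gp_E => /and3P [ha /eqP ta _].
apply: PI_ext; rewrite ?pmul_PI // => A D; rewrite Rel_pmul //.
apply/existsP/idP => [[C /andP [h1 h2]]|h].
  by move: h1; rewrite idem_Rel // => /andP [/eqP -> _].
exists A; rewrite h idem_Rel // /diag eqxx -ta andbT.
by apply/in_tops; exists D.
Qed.

Lemma e_right e a : e \in PIbar n -> pmul e e = e -> a \in Gp e -> pmul a e = a.
Proof.
move=> he hee; rewrite Gp_E => /and3P [ha _ /eqP ba].
apply: PI_ext; rewrite ?pmul_PI // => A D; rewrite Rel_pmul //.
apply/existsP/idP => [[C /andP [h1 h2]]|h].
  by move: h2; rewrite idem_Rel // => /andP [/eqP <- _].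
exists D; rewrite h idem_Rel // /diag eqxx -ba /=.
by apply/in_bots; exists A.
Qed.

Lemma Hclass_Gp e : e \in PIbar n -> pmul e e = e -> Hclass e = Gp e.
Proof.
move=> he hee; apply/setP => a; rewrite Gp_E /Hclass in_set; apply/andP/andP => -[ha h]; split => //.
  case/and4P: h => r1 r2 l1 l2.
  have sub1 : forall x y, x \in PIbar n -> y \in PIbar n -> in_right_ideal x y -> tops x \subset tops y.
    move=> x y hx hy /orP [/eqP -> //|/existsP [s /andP [hs /eqP ->]]].
    exact: tops_pmul_sub.
  have sub2 : forall x y, x \in PIbar n -> y \in PIbar n -> in_left_ideal x y -> bots x \subset bots y.
    move=> x y hx hy /orP [/eqP -> //|/existsP [s /andP [hs /eqP ->]]].
    exact: bots_pmul_sub.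
  have t1 : tops a = tops e by apply/eqP; rewrite eqEsubset sub1 // sub1.
  have t2 : bots a = bots e by apply/eqP; rewrite eqEsubset sub2 // sub2.
  by rewrite t1 t2 bots_idem // eqxx.
have hG : a \in Gp e by rewrite Gp_E ha.
case: (ppow_idem ha) => k [hk hkk].
have ek : ppow a k = e by apply: Gp_idem => //; apply: Gp_pow => //; apply: ltnW.
case: k hk hkk ek => // k hk _ ek.
have hk0 : 0 < k by [].
apply/and4P; split; rewrite /in_right_ideal /in_left_ideal; apply/orP; right; apply/existsP.
- by exists a; rewrite ha e_left ?eqxx.
- by exists (ppow a k); rewrite ppow_PI //= -ek ppowSl.
- by exists a; rewrite ha e_right ?eqxx.
- by exists (ppow a k); rewrite ppow_PI //= -ek ppowS.
Qed.

End Green.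


Section Isol.
Variable n : nat.
Local Notation pt := (point n).
Local Notation blk := {set 'I_n}.
Implicit Types (A B C D : blk) (P Q a b e : elt n) (R S : blk -> blk -> bool) (F G X : {set blk}).

Definition unc F : blk := [set x : 'I_n | [forall A in F, x \notin A]].

Lemma corank_unc e : e \in PIbar n -> corank e = #|unc (tops e)|.
Proof.
move=> he; rewrite /corank /unc; apply: eq_card => x; rewrite !in_set.
have -> : ([set inl x] \in e) = ([set inl x] \in E (Rel e)) by rewrite E_Rel.
rewrite /E /mk in_setU.
have -> : ([set inl x] \in linesOf (Rel e)) = false.
  apply/negbTE/negP => /in_linesOf [A [D [h ex]]].
  case: (Rel_ne h) => h1 h2.
  by move: (mk_neq1 (inl x) h1 h2); rewrite -ex eqxx.
rewrite /=; apply/imsetP/forall_inP => [[z hz /set1_inj ez] A /in_tops [D hD]|h].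
  subst z; move: hz; rewrite !inE => /negP hc; apply/negP => hxA; apply: hc.
  by apply/bigcupP; exists (mkline A D); [apply: mkline_linesOf | rewrite mk_inl].
exists (inl x) => //; rewrite !inE; apply/negP => /bigcupP [Y /in_linesOf [A [D [hAD ->]]]].
rewrite mk_inl => hxA.
have : A \in tops e by apply/in_tops; exists D.
by move/h; rewrite hxA.
Qed.

Lemma ext_family F X : pdf X -> F \subset X -> #|unc F| <= 1 ->
  X = F \/ (unc F \notin F /\ X = unc F |: F).
Proof.
move=> [hne hd] sFX hU.
have key : forall C, C \in X -> C \notin F -> C = unc F.
  move=> C hC hCF; apply/eqP; rewrite eqEcard; apply/andP; split.
    apply/subsetP => x hx; rewrite inE; apply/forall_inP => A hA; apply/negP => hxA.
    have eCA : C = A by apply: hd => //; [apply: (subsetP sFX) | apply/meetP; exists x].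
    by move: hCF; rewrite eCA hA.
  apply: (leq_trans hU); rewrite card_gt0; exact: hne.
case: (boolP (X \subset F)) => [sXF|/subsetPn [C hC hCF]].
  by left; apply/eqP; rewrite eqEsubset sXF.
right; have eC := key C hC hCF; subst C; split => //.
apply/eqP; rewrite eqEsubset; apply/andP; split; apply/subsetP => Y.
  by move=> hY; rewrite in_setU1; case: (boolP (Y \in F)) => [_|/(key Y hY) ->]; rewrite ?eqxx ?orbT.
by rewrite in_setU1 => /orP [/eqP ->|/(subsetP sFX)].
Qed.

Lemma Gp_isolated e a k : e \in PIbar n -> pmul e e = e -> corank e <= 1 ->
  a \in PIbar n -> 0 < k -> ppow a k \in Gp e -> a \in Gp e.
Proof.
move=> he hee hc ha hk; rewrite Gp_E => /and3P [hp /eqP tk /eqP bk].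
rewrite corank_unc // in hc.
have st : tops e \subset tops a by rewrite -tk; apply: tops_pow_sub.
have sb : tops e \subset bots a by rewrite -bk; apply: bots_pow_sub.
have ct := card_tops_bots ha.
case: (ext_family (pdf_tops ha) st hc) => [et|[hU et]];
 case: (ext_family (pdf_bots ha) sb hc) => [eb|[hU' eb]].
- by rewrite Gp_E ha et eb eqxx.
- by move: ct; rewrite et eb cardsU1 hU' add1n => /n_Sn.
- by move: ct; rewrite et eb cardsU1 hU add1n => /esym /n_Sn.
- have e0 : tops a = bots a by rewrite et eb.
  case: (pow_tops_eq ha e0 hk) => e1 _.
  have : unc (tops e) \in tops (ppow a k) by rewrite e1 et setU11.
  by rewrite tk (negbTE hU).
Qed.

End Isol.


Section Rels.
Variable n : nat.
Local Notation pt := (point n).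
Local Notation blk := {set 'I_n}.
Implicit Types (A B C D M H : blk) (P Q a b e : elt n) (R S : blk -> blk -> bool) (F G X : {set blk}).

Definition K (U V : blk) F A B := ((A == U) && (B == V)) || diag F A B.
Definition Sw M H F A B := [|| (A == M) && (B == H), (A == H) && (B == M) | diag F A B].

Lemma compKK (U V : blk) F A D : U \notin F -> V \notin F -> U != V ->
  rcomp (K U V F) (K U V F) A D = diag F A D.
Proof.
move=> hP hQ hPQ; apply/existsP/idP => [[B]|h].
  rewrite /K /diag => /andP [/orP [/andP [/eqP eA /eqP eB]|/andP [/eqP eA hA]]
                             /orP [/andP [/eqP eB' /eqP eD]|/andP [/eqP eB' hB]]]; subst.
  - by rewrite eqxx in hPQ.
  - by rewrite hB in hQ.
  - by rewrite hA in hP.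
  - by rewrite eqxx hB.
exists A; case/andP: h => /eqP <- hA.
by rewrite /K /diag eqxx hA !orbT.
Qed.

Lemma compKK' (U V : blk) F A D : U \notin F -> V \notin F ->
  rcomp (K U V F) (K V U F) A D = diag (U |: F) A D.
Proof.
move=> hP hQ; apply/existsP/idP => [[B]|].
  rewrite /K /diag => /andP [/orP [/andP [/eqP eA /eqP eB]|/andP [/eqP eA hA]]
                             /orP [/andP [/eqP eB' /eqP eD]|/andP [/eqP eB' hB]]]; subst.
  - by rewrite eqxx setU11.
  - by rewrite hB in hQ.
  - by rewrite hA in hQ.
  - by rewrite eqxx in_setU1 hB orbT.
case/andP => /eqP <-; rewrite in_setU1 => /orP [/eqP ->|hA].
  by exists V; rewrite /K !eqxx.
by exists A; rewrite /K /diag eqxx hA !orbT.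
Qed.

Lemma compSwSw M H F A D : M \notin F -> H \notin F -> M != H ->
  rcomp (Sw M H F) (Sw M H F) A D = diag (M |: (H |: F)) A D.
Proof.
move=> hM hH hMH; apply/existsP/idP => [[B]|].
  rewrite /Sw /diag => /andP [/or3P [/andP [/eqP eA /eqP eB]|/andP [/eqP eA /eqP eB]|/andP [/eqP eA hA]]
          /or3P [/andP [/eqP eB' /eqP eD]|/andP [/eqP eB' /eqP eD]|/andP [/eqP eB' hB]]]; subst;
    rewrite ?eqxx ?in_setU1 ?eqxx ?orbT //;
    first [ by rewrite eqxx in hMH | by rewrite hB in hH | by rewrite hB in hM
          | by rewrite hA in hM | by rewrite hA in hH | by rewrite hB !orbT | by rewrite hA !orbT ].
case/andP => /eqP <-; rewrite !in_setU1 => /or3P [/eqP ->|/eqP ->|hA].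
- by exists H; rewrite /Sw !eqxx /= ?orbT.
- by exists M; rewrite /Sw !eqxx /= ?orbT.
- by exists A; rewrite /Sw /diag eqxx hA !orbT.
Qed.

Lemma compSw_diag M H (Fh Gm : {set blk}) A D : M \in Gm -> H \notin Gm -> M != H ->
  Gm \subset Fh ->
  rcomp (Sw M H ((Fh :\ M) :\ H)) (diag Gm) A D = K H M (Gm :\ M) A D.
Proof.
move=> hM hH hMH sub; apply/existsP/idP => [[B]|].
  rewrite /Sw /K /diag => /andP [/or3P [/andP [/eqP eA /eqP eB]|/andP [/eqP eA /eqP eB]|/andP [/eqP eA hA]]
          /andP [/eqP eD hD]]; subst.
  - by rewrite hD in hH.
  - by rewrite !eqxx.
  - by move: hA; rewrite !in_setD1 => /and3P [h1 h2 _]; rewrite eqxx h2 hD orbT.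
rewrite /K /diag => /orP [/andP [/eqP -> /eqP ->]|/andP [/eqP <- hA]].
  by exists M; rewrite /Sw !eqxx hM orbT.
exists A; move: hA; rewrite in_setD1 => /andP [hAM hA].
have hAH : A != H by apply: contraNneq hH => <-.
by rewrite /Sw /diag eqxx !in_setD1 hAM hAH (subsetP sub _ hA) hA !orbT.
Qed.

End Rels.


Section Pdf.
Variable n : nat.
Local Notation pt := (point n).
Local Notation blk := {set 'I_n}.
Implicit Types (A B C D M H : blk) (P Q a b e : elt n) (R S : blk -> blk -> bool) (F G X : {set blk}).

Lemma pdf_sub F G : G \subset F -> pdf F -> pdf G.
Proof.
move=> s [h1 h2]; split; first by move=> A /(subsetP s) /h1.
by move=> A B /(subsetP s) hA /(subsetP s) hB; apply: h2.
Qed.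

Lemma pdf_add C F : pdf F -> C != set0 -> (forall A, A \in F -> [disjoint C & A]) ->
  pdf (C |: F).
Proof.
move=> [h1 h2] hC hd; split.
  by move=> A; rewrite in_setU1 => /orP [/eqP ->|/h1].
move=> A B; rewrite !in_setU1 => /orP [/eqP ->|hA] /orP [/eqP ->|hB] hm //.
- by move: hm; rewrite hd.
- by move: hm; rewrite disjoint_sym hd.
- exact: h2.
Qed.

Lemma notin_disj C F : C != set0 -> (forall A, A \in F -> [disjoint C & A]) -> C \notin F.
Proof.
move=> hC hd; apply/negP => /hd; case/set0Pn: hC => x hx.
by move/disjointFr => /(_ x hx); rewrite hx.
Qed.

Lemma valid_pf R F1 F2 : pdf F1 -> pdf F2 ->
  (forall A B, R A B -> A \in F1 /\ B \in F2) ->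
  (forall A B B', R A B -> R A B' -> B = B') ->
  (forall A A' B, R A B -> R A' B -> A = A') -> valid R.
Proof.
move=> [h11 h12] [h21 h22] hin hf hi; split.
- by move=> A B /hin [/h11 -> /h21 ->].
- move=> A D A' D' h h' hm; case: (hin _ _ h) => hA _; case: (hin _ _ h') => hA' _.
  have e := h12 _ _ hA hA' hm; subst A'; split => //; exact: hf h h'.
- move=> A D A' D' h h' hm; case: (hin _ _ h) => _ hD; case: (hin _ _ h') => _ hD'.
  have e := h22 _ _ hD hD' hm; subst D'; split => //; exact: hi h h'.
Qed.

Lemma valid_K (U V : blk) F : pdf (U |: F) -> pdf (V |: F) -> U \notin F -> V \notin F ->
  valid (K U V F).
Proof.
move=> p1 p2 hU hV; apply: (valid_pf p1 p2).
- move=> A B /orP [/andP [/eqP -> /eqP ->]|/andP [/eqP <- hA]];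
    by rewrite !in_setU1 ?eqxx ?hA ?orbT.
- move=> A B B' /orP [/andP [/eqP eA /eqP eB]|/andP [/eqP eA hA]]
                /orP [/andP [/eqP eA' /eqP eB']|/andP [/eqP eA' hA']]; subst => //.
  + by rewrite hA' in hU.
  + by rewrite hA in hU.
- move=> A A' B /orP [/andP [/eqP eA /eqP eB]|/andP [/eqP eA hA]]
                /orP [/andP [/eqP eA' /eqP eB']|/andP [/eqP eA' hA']]; subst => //.
  + by rewrite hA' in hV.
  + by rewrite hA in hV.
Qed.

Lemma valid_Sw M H F : pdf (M |: (H |: F)) -> M \notin F -> H \notin F -> M != H ->
  valid (Sw M H F).
Proof.
move=> p hM hH hMH; apply: (valid_pf p p).
- move=> A B /or3P [/andP [/eqP -> /eqP ->]|/andP [/eqP -> /eqP ->]|/andP [/eqP <- hA]];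
    by rewrite !in_setU1 ?eqxx ?hA ?orbT.
- move=> A B B' /or3P [/andP [/eqP eA /eqP eB]|/andP [/eqP eA /eqP eB]|/andP [/eqP eA hA]]
                /or3P [/andP [/eqP eA' /eqP eB']|/andP [/eqP eA' /eqP eB']|/andP [/eqP eA' hA']];
    subst => //; first [ by rewrite eqxx in hMH | by rewrite hA in hM | by rewrite hA in hH
                       | by rewrite hA' in hM | by rewrite hA' in hH ].
- move=> A A' B /or3P [/andP [/eqP eA /eqP eB]|/andP [/eqP eA /eqP eB]|/andP [/eqP eA hA]]
                /or3P [/andP [/eqP eA' /eqP eB']|/andP [/eqP eA' /eqP eB']|/andP [/eqP eA' hA']];
    subst => //; first [ by rewrite eqxx in hMH | by rewrite hA in hM | by rewrite hA in hH
                       | by rewrite hA' in hM | by rewrite hA' in hH ].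
Qed.

Lemma diag0 : E (diag (set0 : {set blk})) = zeroE n.
Proof. by apply: eq_E => A D; rewrite /diag inE andbF. Qed.

Lemma pow_Sn_inv a k : a \in PIbar n -> 0 < k -> ppow a k \in Sn n -> a \in Sn n.
Proof.
move=> ha; case: k => // k _; case: k => [|k]; first by rewrite ppow1.
by rewrite ppowS // => /Sn_mul_inv [] //; apply: ppow_PI.
Qed.

Lemma pow_Sn a k : a \in Sn n -> 0 < k -> ppow a k \in Sn n.
Proof.
move=> ha; elim: k => // k IH _; case: k IH => [_|k IH]; first by rewrite ppow1.
by rewrite ppowS // Sn_mul // IH.
Qed.

End Pdf.


Section TSec.
Variable n : nat.
Local Notation pt := (point n).
Local Notation blk := {set 'I_n}.
Implicit Types (A B C D M H : blk) (P Q a b e : elt n) (R S : blk -> blk -> bool) (F G X Fh Fm : {set blk}).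
Variable T : {set elt n}.
Hypothesis hT : isolated_subsemigroup T.

Lemma T_PI a : a \in T -> a \in PIbar n.
Proof. by case: hT => /subsetP h _ _ _ /h. Qed.

Lemma T_mul a b : a \in T -> b \in T -> pmul a b \in T.
Proof. by case: hT => _ _ h _; apply: h. Qed.

Lemma T_iso a k : a \in PIbar n -> 0 < k -> ppow a k \in T -> a \in T.
Proof. by case: hT => _ _ _ h; apply: h. Qed.

Lemma T_sq a : a \in PIbar n -> pmul a a \in T -> a \in T.
Proof. by move=> ha h; apply: (@T_iso a 2). Qed.

Lemma T_pow a k : a \in T -> 0 < k -> ppow a k \in T.
Proof.
move=> ha; elim: k => // k IH _; case: k IH => [_|k IH]; first by rewrite ppow1.
by rewrite ppowS // T_mul // IH.
Qed.

Lemma step_T Fh Fm M : pdf Fh -> Fm \subset Fh -> Fm != Fh ->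
  E (diag Fh) \in T -> E (diag Fm) \in T -> M \in Fm -> E (diag (Fm :\ M)) \in T.
Proof.
move=> pFh sub neq hh hm hM.
have [H hHh hHm] : exists2 H, H \in Fh & H \notin Fm.
  apply/subsetPn; apply: contra neq => s; rewrite eqEsubset sub; exact: s.
have hMh : M \in Fh by apply: (subsetP sub).
have hMH : M != H by apply: contraNneq hHm => <-.
set F := (Fh :\ M) :\ H.
have hMF : M \notin F by rewrite !in_setD1 eqxx andbF.
have hHF : H \notin F by rewrite !in_setD1 eqxx.
have eFh : M |: (H |: F) = Fh.
  apply/setP => Y; rewrite !in_setU1 !in_setD1.
  case: (eqVneq Y M) => [->|_]; first by rewrite hMh.
  by case: (eqVneq Y H) => [->|_] //=; rewrite ?hHh.
have pSw : pdf (M |: (H |: F)) by rewrite eFh.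
have vSw := valid_Sw pSw hMF hHF hMH.
have pFm : pdf Fm by apply: pdf_sub pFh.
have hx : E (Sw M H F) \in T.
  apply: T_sq; first exact: E_PIbar.
  rewrite pmul_EE //; suff -> : E (rcomp (Sw M H F) (Sw M H F)) = E (diag Fh) by [].
  by apply: eq_E => A D; rewrite compSwSw // eFh.
have hy := T_mul hx hm.
have vdm := valid_diag pFm; rewrite pmul_EE // in hy.
have eK : E (rcomp (Sw M H F) (diag Fm)) = E (K H M (Fm :\ M)).
  by apply: eq_E => A D; rewrite compSw_diag.
rewrite eK in hy.
have hHM : H \notin Fm :\ M by rewrite in_setD1 (negbTE hHm) andbF.
have hMM : M \notin Fm :\ M by rewrite in_setD1 eqxx.
have vK : valid (K H M (Fm :\ M)).
  apply: valid_K => //; apply: pdf_sub pFh; apply/subsetP => Y; rewrite in_setU1 => /orP [/eqP ->|] //.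
    by move/setD1P => [_ /(subsetP sub)].
  by move/setD1P => [_ /(subsetP sub)].
have := T_mul hy hy; rewrite pmul_EE //.
suff -> : E (rcomp (K H M (Fm :\ M)) (K H M (Fm :\ M))) = E (diag (Fm :\ M)) by [].
by apply: eq_E => A D; rewrite compKK // eq_sym.
Qed.

Lemma zero_T_ind Fh : pdf Fh -> E (diag Fh) \in T ->
  forall N Fm, #|Fm| <= N -> Fm \subset Fh -> Fm != Fh -> E (diag Fm) \in T -> zeroE n \in T.
Proof.
move=> pFh hh; elim=> [|N IH] Fm hc sub neq hm.
  by move: hc; rewrite leqn0 cards_eq0 => /eqP e; rewrite -diag0 -e.
case: (set_0Vmem Fm) => [e|[M hM]]; first by rewrite -diag0 -e.
apply: (IH (Fm :\ M)).
- by move: hc; rewrite (cardsD1 M) hM.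
- by apply: subset_trans sub; apply: subD1set.
- apply: contra neq => /eqP e; rewrite eqEsubset sub -e; apply: subD1set.
- exact: (step_T pFh sub neq hh hm hM).
Qed.

Lemma zero_T e f : e \in T -> f \in T -> pmul e e = e -> pmul f f = f -> e != f ->
  zeroE n \in T.
Proof.
move=> he hf hee hff neq.
have heP := T_PI he; have hfP := T_PI hf.
have pe := pdf_tops heP; have pf := pdf_tops hfP.
have Ee := idem_E heP hee; have Ef := idem_E hfP hff.
have vde := valid_diag pe; have vdf := valid_diag pf.
have hm : E (diag (tops e :&: tops f)) \in T.
  have := T_mul he hf; rewrite {1}Ee {1}Ef pmul_EE //.
  by suff -> : E (rcomp (diag (tops e)) (diag (tops f))) = E (diag (tops e :&: tops f)) by [];
    apply: eq_E => A D; rewrite comp_diag.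
case: (eqVneq (tops e :&: tops f) (tops e)) => [eI|nI].
  have hfT : E (diag (tops f)) \in T by rewrite -Ef.
  apply: (zero_T_ind pf hfT (leqnn #|tops e|)).
  - by rewrite -eI subsetIr.
  - by apply: contra neq => /eqP et; apply/eqP; rewrite Ee Ef et.
  - by rewrite -Ee.
have heT : E (diag (tops e)) \in T by rewrite -Ee.
apply: (zero_T_ind pe heT (leqnn #|tops e :&: tops f|)) => //.
exact: subsetIl.
Qed.

Lemma meet_in x (A B : blk) : x \in A -> x \in B -> ~~ [disjoint A & B].
Proof. by move=> h1 h2; apply/meetP; exists x. Qed.

Lemma nonunit_idem_T : zeroE n \in T ->
  forall N F, #|F| <= N -> pdf F -> E (diag F) \notin Sn n -> E (diag F) \in T.
Proof.
move=> h0; elim=> [|N IH] F hc pF hS.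
  by move: hc; rewrite leqn0 cards_eq0 => /eqP ->; rewrite diag0.
case: (set_0Vmem F) => [->|[G0 hG0]]; first by rewrite diag0.
have [pF1 pF2] := pF.
have [G [F0 [hG hF0 hF0G hd]]] : exists (G F0 : blk), [/\ G \in F, F0 != set0, F0 != G &
    forall A, A \in F :\ G -> [disjoint F0 & A]].
  case: (set_0Vmem (unc F)) => [eU|[z hz]].
    case: (boolP [exists G in F, 1 < #|G|]) => [/exists_inP [G hG /card_gt1P [x [y [hx hy hxy]]]]|hno].
      exists G, [set x]; split => //; first exact: set1_ne.
        by apply/eqP => eG; move: hy; rewrite -eG inE => /eqP ey; rewrite ey eqxx in hxy.
      move=> A /setD1P [hAG hA]; rewrite disjoints1; apply/negP => hxA.
      by move: hAG; rewrite (pF2 _ _ hA hG (meet_in hxA hx)) eqxx.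
    exfalso; move/negP: hS; apply; apply/Sn_unitP; split; first exact: diag_PI.
      move=> A D; rewrite Rel_diag // => /andP [/eqP <- hA].
      have : #|A| <= 1 by rewrite leqNgt; apply: contra hno => h; apply/exists_inP; exists A.
      by rewrite leq_eqVlt ltnS leqn0 cards_eq0 (negbTE (pF1 _ hA)) orbF => /eqP.
    move=> x; have : x \notin unc F by rewrite eU inE.
    rewrite inE negb_forall_in => /exists_inP [A hA]; rewrite negbK => hxA.
    have cA : #|A| = 1.
      apply/eqP; rewrite eqn_leq card_gt0 pF1 // andbT leqNgt.
      by apply: contra hno => h; apply/exists_inP; exists A.
    move: cA => /eqP /cards1P [y eA]; move: hxA; rewrite eA inE => /eqP ->.
    by exists [set y]; rewrite Rel_diag // /diag eqxx -eA.
  exists G0, [set z]; split => //; first exact: set1_ne.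
    apply/eqP => eG; move: hz; rewrite inE => /forall_inP /(_ _ hG0).
    by rewrite -eG inE eqxx.
  move=> A /setD1P [_ hA]; rewrite disjoints1.
  by move: hz; rewrite inE => /forall_inP /(_ _ hA).
set F' := F :\ G.
have pF' : pdf F' by apply: pdf_sub pF; apply: subD1set.
have hF'T : E (diag F') \in T.
  apply: IH => //.
    by move: hc; rewrite (cardsD1 G) hG.
  apply/negP => /Sn_unitP [_ _ hx].
  case/set0Pn: (pF1 _ hG) => x hxG; case: (hx x) => D; rewrite Rel_diag //.
  case/andP => _ /setD1P [hne hxF].
  by move: hne; rewrite (pF2 _ _ hxF hG (meet_in (set11 x) hxG)) eqxx.
have hF0F' : F0 \notin F' by apply: notin_disj.
have hGF' : G \notin F' by rewrite /F' setD11.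
have pGF : pdf (G |: F') by apply: pdf_sub pF; rewrite /F' setD1K.
have pF0F : pdf (F0 |: F') by apply: pdf_add.
have vx : valid (K G F0 F') by apply: valid_K.
have vy : valid (K F0 G F') by apply: valid_K.
have vd := valid_diag pF'.
have hx : E (K G F0 F') \in T.
  apply: T_sq; first exact: E_PIbar.
  rewrite pmul_EE //; suff -> : E (rcomp (K G F0 F') (K G F0 F')) = E (diag F') by [].
  by apply: eq_E => A D; rewrite compKK // eq_sym.
have hy : E (K F0 G F') \in T.
  apply: T_sq; first exact: E_PIbar.
  rewrite pmul_EE //; suff -> : E (rcomp (K F0 G F') (K F0 G F')) = E (diag F') by [].
  by apply: eq_E => A D; rewrite compKK.
have := T_mul hx hy; rewrite pmul_EE //.
suff -> : E (rcomp (K G F0 F') (K F0 G F')) = E (diag F) by [].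
by apply: eq_E => A D; rewrite compKK' // /F' setD1K.
Qed.

Lemma nonunit_T a : zeroE n \in T -> a \in PIbar n -> a \notin Sn n -> a \in T.
Proof.
move=> h0 ha hS; case: (ppow_idem ha) => k [hk hkk].
have hk0 : 0 < k by apply: ltnW.
have hf := ppow_PI ha hk0.
apply: (T_iso ha hk0); rewrite (idem_E hf hkk).
apply: (nonunit_idem_T h0 (leqnn _) (pdf_tops hf)).
rewrite -(idem_E hf hkk); apply: contra hS; exact: pow_Sn_inv.
Qed.

Lemma corank_T e : e \in T -> pmul e e = e ->
  (forall f, f \in T -> pmul f f = f -> f = e) -> corank e <= 1.
Proof.
move=> he hee huniq; have heP := T_PI he.
rewrite corank_unc // leqNgt; apply/negP => /card_gt1P [x1 [x2 [h1 h2 h12]]].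
set F := tops e; have pF := pdf_tops heP.
have dis : forall x, x \in unc F -> forall A, A \in F -> [disjoint [set x] & A].
  by move=> x hx A hA; rewrite disjoints1; move: hx; rewrite inE => /forall_inP /(_ _ hA).
have nin : forall x, x \in unc F -> [set x] \notin F.
  by move=> x hx; apply: notin_disj; [exact: set1_ne | exact: dis].
have p1 : pdf ([set x1] |: F) by apply: pdf_add => //; [exact: set1_ne | exact: dis].
have p2 : pdf ([set x2] |: F) by apply: pdf_add => //; [exact: set1_ne | exact: dis].
have n1 := nin _ h1; have n2 := nin _ h2.
have h12' : [set x1] != [set x2] by apply: contra h12 => /eqP /set1_inj ->.
have va : valid (K [set x1] [set x2] F) by apply: valid_K.
have vb : valid (K [set x2] [set x1] F) by apply: valid_K.
have Ee := idem_E heP hee.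
have ha : E (K [set x1] [set x2] F) \in T.
  apply: T_sq; first exact: E_PIbar.
  rewrite pmul_EE //; suff -> : E (rcomp (K [set x1] [set x2] F) (K [set x1] [set x2] F)) = e by [].
  by rewrite Ee; apply: eq_E => A D; rewrite compKK.
have hb : E (K [set x2] [set x1] F) \in T.
  apply: T_sq; first exact: E_PIbar.
  rewrite pmul_EE //; suff -> : E (rcomp (K [set x2] [set x1] F) (K [set x2] [set x1] F)) = e by [].
  by rewrite Ee; apply: eq_E => A D; rewrite compKK // eq_sym.
have := T_mul ha hb; rewrite pmul_EE //.
have -> : E (rcomp (K [set x1] [set x2] F) (K [set x2] [set x1] F)) = E (diag ([set x1] |: F)).
  by apply: eq_E => A D; rewrite compKK'.
move=> hf; have := huniq _ hf (diag_idem p1) => ef.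
have := tops_diag p1; rewrite ef -/F => eF.
by move: n1; rewrite eF setU11.
Qed.

End TSec.


Section Main.
Variable n : nat.
Implicit Types (a b e : elt n) (T : {set elt n}).

Lemma iso_PIbar : isolated_subsemigroup (PIbar n).
Proof.
split => //.
- by apply/set0Pn; exists (zeroE n); apply: zero_PI.
- exact: pmul_PI.
Qed.

Lemma iso_Sn : isolated_subsemigroup (Sn n).
Proof.
split.
- by apply/subsetP => a; apply: Sn_PI.
- by apply/set0Pn; exists (permElt 1); apply: id_Sn.
- exact: Sn_mul.
- by move=> a k ha hk; apply: pow_Sn_inv.
Qed.

Lemma iso_nonSn : 0 < n -> isolated_subsemigroup (PIbar n :\: Sn n).
Proof.
move=> hn; split.
- exact: subsetDl.
- by apply/set0Pn; exists (zeroE n); rewrite in_setD zero_PI zero_notSn.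
- move=> a b /setDP [ha hSa] /setDP [hb hSb]; rewrite in_setD pmul_PI // andbT.
  by apply/negP => /(Sn_mul_inv ha hb) [h _]; rewrite h in hSa.
- move=> a k ha hk /setDP [_ hS]; rewrite in_setD ha andbT.
  by apply: contra hS => h; apply: pow_Sn.
Qed.

Lemma e_Gp e : e \in PIbar n -> pmul e e = e -> e \in Gp e.
Proof. by move=> he hee; rewrite Gp_E he bots_idem // eqxx. Qed.

Lemma iso_H e : e \in PIbar n -> pmul e e = e -> corank e <= 1 ->
  isolated_subsemigroup (Hclass e).
Proof.
move=> he hee hc; rewrite Hclass_Gp //; split.
- by apply/subsetP => a; apply: Gp_PI.
- by apply/set0Pn; exists e; apply: e_Gp.
- exact: Gp_mul.
- by move=> a k ha hk; apply: Gp_isolated.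
Qed.

End Main.

Theorem mainTheorem13 (n : nat) (hn : 2 <= n) (T : {set elt n}) :
  isolated_subsemigroup T <->
  [\/ T = PIbar n, T = Sn n, T = PIbar n :\: Sn n
    | exists e, [/\ e \in PIbar n, PI_idempotent e, corank e <= 1 & T = Hclass e]].
Proof.
have hn0 : 0 < n by apply: ltnW.
split; last first.
  case=> [->|->|->|[e [he /eqP hee hc ->]]].
  - exact: iso_PIbar.
  - exact: iso_Sn.
  - exact: iso_nonSn.
  - exact: iso_H.
move=> hT; have hTP : T \subset PIbar n by case: hT.
case: (boolP [exists e, exists f, [&& e \in T, f \in T, pmul e e == e, pmul f f == f & e != f]]).
  case/existsP => e /existsP [f /and5P [he hf /eqP hee /eqP hff hef]].
  have h0 := zero_T hT he hf hee hff hef.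
  have hnon : forall a, a \in PIbar n -> a \notin Sn n -> a \in T.
    by move=> a; apply: nonunit_T.
  case: (boolP [exists u, (u \in T) && (u \in Sn n)]).
    case/existsP => u /andP [huT huS]; apply: Or41.
    apply/eqP; rewrite eqEsubset hTP; apply/subsetP => a ha.
    case: (boolP (a \in Sn n)) => haS; last exact: hnon.
    have huP := T_PI hT huT.
    case: (ppow_idem huP) => ku [hku hkku]; have hku0 : 0 < ku by apply: ltnW.
    case: (ppow_idem ha) => ka [hka hkka]; have hka0 : 0 < ka by apply: ltnW.
    apply: (T_iso hT ha hka0).
    rewrite (Sn_idem_uniq (pow_Sn haS hka0) (pow_Sn huS hku0) hkka hkku).
    exact: T_pow.
  move=> hno; apply: Or43; apply/eqP; rewrite eqEsubset; apply/andP; split; apply/subsetP => a.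
    move=> haT; rewrite in_setD (subsetP hTP _ haT) andbT.
    by apply: contra hno => haS; apply/existsP; exists a; rewrite haT.
  by case/setDP => ha haS; apply: hnon.
move=> hno.
have huniq : forall e f, e \in T -> f \in T -> pmul e e = e -> pmul f f = f -> e = f.
  move=> e f he hf hee hff; apply/eqP; apply: contraNT hno => hef.
  by apply/existsP; exists e; apply/existsP; exists f; rewrite he hf hee hff !eqxx.
have [_ /set0Pn [a haT] _ _] := hT.
have haP := T_PI hT haT.
case: (ppow_idem haP) => k [hk hkk]; have hk0 : 0 < k by apply: ltnW.
set e := ppow a k.
have heT : e \in T by apply: T_pow.
have heP : e \in PIbar n by apply: ppow_PI.
have hc : corank e <= 1.
  by apply: (corank_T hT heT hkk) => f hf hff; apply: huniq.
apply: Or44; exists e; split => //; first exact/eqP.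
rewrite Hclass_Gp //; apply/setP => b; apply/idP/idP => hb.
  have hbP := T_PI hT hb.
  case: (ppow_idem hbP) => kb [hkb hkkb]; have hkb0 : 0 < kb by apply: ltnW.
  apply: (Gp_isolated heP hkk hc hbP hkb0).
  rewrite (huniq _ _ (T_pow hT hb hkb0) heT hkkb hkk).
  exact: e_Gp.
have hbP := Gp_PI hb.
case: (ppow_idem hbP) => kb [hkb hkkb]; have hkb0 : 0 < kb by apply: ltnW.
apply: (T_iso hT hbP hkb0).
by rewrite (Gp_idem heP hkk (Gp_pow hb hkb0) hkkb).
Qed.
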